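(* Let $\ell$ be a prime and let $G$ be a subgroup of $\mathrm{GSp}_4(\mathbb{F}_\ell)$ maximal among Hasse subgroups of $\mathrm{GSp}_4(\mathbb{F}_\ell)$, such that $G\cap\mathrm{Sp}_4(\mathbb{F}_\ell)$ acts reducibly on $\mathbb{F}_\ell^4$. Then $\lambda(G)=\mathbb{F}_\ell^\times$.
   Context: Fix a non-degenerate alternating form on $\mathbb{F}_\ell^4$ with matrix $J$. $\mathrm{GSp}_4(\mathbb{F}_\ell)=\{M\in\mathrm{GL}_4(\mathbb{F}_\ell): M^TJM=kJ\text{ for some }k\in\mathbb{F}_\ell^\times\}$, with multiplier $\lambda(M)=k$, and $\mathrm{Sp}_4(\mathbb{F}_\ell)=\ker\lambda$. A subgroup of $\mathrm{GL}_n(\mathbb{F}_\ell)$ is Hasse if it acts irreducibly on $\mathbb{F}_\ell^n$ and each of its elements has an eigenvalue in $\mathbb{F}_\ell$. *)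

(* Defs.v *)
From HB Require Import structures.
From mathcomp Require Import all_boot all_order all_algebra all_fingroup.
Set Implicit Arguments. Unset Strict Implicit. Unset Printing Implicit Defensive.
Import GRing.Theory.
Local Open Scope ring_scope.

Section GSp4.
Variable F : finFieldType.

(* J is the matrix of a non-degenerate alternating form (x,y) |-> x^T J y on F^4 *)
Definition nondeg_alternating (J : 'M[F]_4) : Prop :=
  [/\ J^T = - J, (forall i, J i i = 0) & \det J != 0].

Definition GSp4 (J : 'M[F]_4) : {set {'GL_4[F]}} :=
  [set M : {'GL_4[F]} | [exists k : F, (k != 0) && ((GLval M)^T *m J *m GLval M == k *: J)]].

(* the multiplier lambda(M): the k with M^T J M = k J (0 if M is not in GSp) *)
Definition mult (J : 'M[F]_4) (M : 'M[F]_4) : F :=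
  odflt 0 [pick k : F | (k != 0) && (M^T *m J *m M == k *: J)].

Definition Sp4 (J : 'M[F]_4) : {set {'GL_4[F]}} :=
  [set M in GSp4 J | mult J (GLval M) == 1].

(* H acts irreducibly on F^4 (column vectors, v |-> M v): the only H-stable
   subspaces are 0 and F^4.  A subspace W is encoded as the row space of U
   (rows = transposed vectors of W); M W <= W  iff  U M^T <= U. *)
Definition irreducible_on_F4 (H : {set {'GL_4[F]}}) : Prop :=
  forall U : 'M[F]_4,
    (forall h, h \in H -> (U *m (GLval h)^T <= U)%MS) ->
    (U == 0) || row_full U.

Definition Hasse (H : {set {'GL_4[F]}}) : Prop :=
  irreducible_on_F4 H /\ (forall h, h \in H -> exists a : F, eigenvalue (GLval h) a).

Definition maximal_Hasse_in_GSp4 (J : 'M[F]_4) (G : {group {'GL_4[F]}}) : Prop :=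
  [/\ G \subset GSp4 J, Hasse G &
      forall H : {group {'GL_4[F]}}, H \subset GSp4 J -> Hasse H -> G \subset H -> H = G].

End GSp4.

(* Main.v *)
Require Import Defs.
From HB Require Import structures.
From mathcomp Require Import all_boot all_order all_algebra all_fingroup.
Import GRing.Theory.
Local Open Scope ring_scope.

Module Aux.
Set Implicit Arguments. Unset Strict Implicit. Unset Printing Implicit Defensive.

Section Aux.
Variable F : finFieldType.
Implicit Types (J M : 'M[F]_4).

Lemma multP J M k : J != 0 -> k != 0 -> M^T *m J *m M = k *: J -> mult J M = k.
Proof.
move=> J0 k0 E; rewrite /mult; case: pickP => [k' /andP[_ /eqP E']|/(_ k)].
  rewrite /= E in E'; apply/eqP; move: E' => /eqP; rewrite -subr_eq0 -scalerBl.
  by rewrite scalemx_eq0 (negbTE J0) orbF subr_eq0 eq_sym.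
by rewrite k0 E eqxx.
Qed.

Lemma GSpP J (u : {'GL_4[F]}) : J != 0 -> u \in GSp4 J ->
  mult J (GLval u) != 0 /\ (GLval u)^T *m J *m GLval u = mult J (GLval u) *: J.
Proof.
move=> J0; rewrite inE => /existsP[k /andP[k0 /eqP E]].
by rewrite (multP J0 k0 E); split.
Qed.

Lemma GSpI J (u : {'GL_4[F]}) k : k != 0 -> (GLval u)^T *m J *m GLval u = k *: J -> u \in GSp4 J.
Proof. by move=> k0 E; rewrite inE; apply/existsP; exists k; rewrite k0 E eqxx. Qed.

Definition sc (z : F) : {'GL_4[F]} := insubd (1%g : {'GL_4[F]}) (z%:M : 'M[F]_4).

Lemma scE z : z != 0 -> GLval (sc z) = z%:M.
Proof.
move=> z0; rewrite /sc insubdK //.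
by rewrite unfold_in /= unitmxE det_scalar unitfE expf_neq0.
Qed.

Lemma congr_sc J M z : (M *m z%:M)^T *m J *m (M *m z%:M) = z^+2 *: (M^T *m J *m M).
Proof.
by rewrite trmx_mul tr_scalar_mx mul_scalar_mx mul_mx_scalar -scalemxAl -scalemxAl
  -scalemxAr scalerA expr2.
Qed.

Lemma sc1 : sc 1 = 1%g.
Proof. by apply: val_inj; rewrite /= scE ?oner_neq0. Qed.

Lemma scM a b : a != 0 -> b != 0 -> (sc a * sc b)%g = sc (a * b).
Proof.
move=> a0 b0; apply: val_inj.
change (GLval (sc a * sc b) = GLval (sc (a * b))); rewrite GL_MxE. by rewrite !scE ?mulf_neq0 // scalar_mxM.
Qed.

Definition Zset : {set {'GL_4[F]}} := [set sc z | z in [set z : F | z != 0]].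

Lemma Zgroup : group_set Zset.
Proof.
apply/group_setP; split.
  by apply/imsetP; exists 1; rewrite ?inE ?oner_neq0 ?sc1.
move=> x y /imsetP[a]; rewrite inE => a0 -> /imsetP[b]; rewrite inE => b0 ->.
by rewrite scM //; apply/imsetP; exists (a * b); rewrite // inE mulf_neq0.
Qed.

Lemma nzJ J : nondeg_alternating J -> J != 0.
Proof. by case=> _ _; apply: contraNneq => ->; rewrite det0. Qed.

Lemma scalars_in (J : 'M[F]_4) (HJ : nondeg_alternating J) (G : {group {'GL_4[F]}}) :
  maximal_Hasse_in_GSp4 J G -> forall z, z != 0 -> sc z \in G.
Proof.
case=> GS [Girr Geig] Gmax z z0.
have J0 := nzJ HJ.
pose Zg := Group Zgroup.
have ZC : Zg \subset ('C(G))%g.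
  apply/centsP => x /imsetP[a]; rewrite inE => a0 -> y _.
  apply: val_inj; change (GLval (sc a * y) = GLval (y * sc a)).
  by rewrite !GL_MxE scE // scalar_mxC.
have HE := cent_joinEr ZC.
have GH : G \subset (G <*> Zg)%G by exact: joing_subl.
have HG : (G <*> Zg)%G = G.
  apply: Gmax => //.
  - apply/subsetP => h; rewrite /= HE => /mulsgP[g x gG /imsetP[a]]; rewrite inE => a0 -> ->.
    have [m0 Em] := GSpP J0 (subsetP GS g gG).
    apply: (GSpI (k := a^+2 * mult J (GLval g))); first by rewrite mulf_neq0 ?expf_neq0.
    by rewrite GL_MxE scE // congr_sc Em scalerA.
  - split.
      move=> U stab; apply: Girr => h hG; apply: stab; exact: (subsetP GH).
    move=> h; rewrite /= HE => /mulsgP[g x gG /imsetP[a]]; rewrite inE => a0 -> ->.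
    have [b /eigenvalueP[v Ev v0]] := Geig g gG.
    exists (b * a); apply/eigenvalueP; exists v => //.
    by rewrite GL_MxE scE // mulmxA Ev -scalemxAl mul_mx_scalar scalerA mulrC.
have : sc z \in (G <*> Zg)%G.
  by apply: (subsetP (joing_subr G Zg)); apply/imsetP; exists z; rewrite ?inE.
by rewrite HG.
Qed.

Lemma sq_card : (#|[set k : F | k != 0%R]| <= 2 * #|[set (z^+2)%R | z in [set z : F | z != 0%R]]|)%N.
Proof.
set Nz := [set k : F | k != 0]; set Sq := [set z^+2 | z in Nz].
pose h (y : F) := odflt 0 [pick t | t^+2 == y].
pose A := h @: Sq; pose B := [set - t | t in A].
have sub : Nz \subset A :|: B.
  apply/subsetP => x xN; have xS : x^+2 \in Sq by apply/imsetP; exists x.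
  have : h (x^+2) ^+ 2 = x ^+ 2.
    by rewrite /h; case: pickP => [t /eqP //|/(_ x)]; rewrite eqxx.
  move/eqP; rewrite -subr_eq0 subr_sqr mulf_eq0 => /orP[|].
    by rewrite subr_eq0 => /eqP <-; rewrite inE; apply/orP; left; apply/imsetP; exists (x^+2).
  rewrite addr_eq0 => /eqP E; rewrite inE; apply/orP; right; apply/imsetP.
  exists (h (x^+2)); first by apply/imsetP; exists (x^+2).
  by rewrite E opprK.
apply: leq_trans (subset_leq_card sub) _.
rewrite cardsU mul2n -addnn; apply: leq_trans (leq_subr _ _) _.
apply: leq_add; first exact: leq_imset_card.
exact: leq_trans (leq_imset_card _ _) (leq_imset_card _ _).
Qed.

Lemma main_gen (J : 'M[F]_4) (HJ : nondeg_alternating J) (G : {group {'GL_4[F]}}) :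
  maximal_Hasse_in_GSp4 J G ->
  ~ irreducible_on_F4 (G :&: Sp4 J) ->
  [set mult J (GLval g) | g : {'GL_4[F]} in G] = [set k : F | k != 0].
Proof.
move=> HG Hred; have J0 := nzJ HJ.
have scG := scalars_in HJ HG.
case: HG => GS [Girr Geig] _.
have multsc z : z != 0 -> mult J (GLval (sc z)) = z^+2.
  move=> z0; apply: multP => //; first by rewrite expf_neq0.
  by rewrite scE // -[z%:M]mul1mx congr_sc trmx1 mul1mx mulmx1.
have [allsq|] := boolP [forall g in G, [exists z, (z != 0) && (mult J (GLval g) == z^+2)]].
  exfalso; apply: Hred => U stab; apply: Girr => g gG.
  have /existsP[z /andP[z0 /eqP Ez]] := forall_inP allsq g gG.
  have zi0 : z^-1 != 0 by rewrite invr_eq0.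
  have hG : (g * sc (z^-1)%R)%g \in G :&: Sp4 J.
    have [m0 Em] := GSpP J0 (subsetP GS g gG).
    have E1 : (GLval (g * sc (z^-1)%R)%g)^T *m J *m GLval (g * sc (z^-1)%R)%g = 1 *: J.
      by rewrite GL_MxE scE // congr_sc Em scalerA Ez -exprMn mulVf // expr1n.
    rewrite inE groupM ?scG //= inE (GSpI (oner_neq0 _) E1) /=.
    by rewrite (multP J0 (oner_neq0 _) E1).
  have := stab _ hG; rewrite GL_MxE scE // trmx_mul tr_scalar_mx mul_scalar_mx -scalemxAr.
  move/(scalemx_sub z); rewrite scalerA mulfV // scale1r //.
rewrite negb_forall_in => /existsP[g0 /andP[g0G nsq]].
have [m0 Em0] := GSpP J0 (subsetP GS g0 g0G).
set k0 := mult J (GLval g0) in m0 Em0 nsq.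
set S := [set _ | _ in G]; set Nz := [set k : F | k != 0]; set Sq := [set z^+2 | z in Nz].
have SN : S \subset Nz.
  apply/subsetP => k /imsetP[g gG ->]; rewrite inE; exact: (GSpP J0 (subsetP GS g gG)).1.
apply/eqP; rewrite eqEcard SN /=.
pose kSq := [set k0 * x | x in Sq].
have SqS : Sq \subset S.
  apply/subsetP => k /imsetP[z]; rewrite inE => z0 ->.
  by apply/imsetP; exists (sc z); rewrite ?scG ?multsc.
have kSqS : kSq \subset S.
  apply/subsetP => k /imsetP[y /imsetP[z]]; rewrite inE => z0 -> ->.
  apply/imsetP; exists (g0 * sc z)%g; first by rewrite groupM ?scG.
  apply/esym/multP => //; first by rewrite mulf_neq0 ?expf_neq0.
  by rewrite GL_MxE scE // congr_sc Em0 scalerA mulrC.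
have dis : Sq :&: kSq = set0.
  apply/setP => y; rewrite !inE; apply/negP => /andP[/imsetP[z]]; rewrite inE => z0 ->.
  case/imsetP => xx /imsetP[w]; rewrite inE => w0 -> E.
  move/existsP: nsq; apply; exists (z / w); rewrite mulf_neq0 ?invr_eq0 //=.
  by rewrite expr_div_n E mulfK ?expf_neq0.
have ck : #|kSq| = #|Sq| by apply: card_imset; apply: mulfI.
apply: leq_trans sq_card _.
have : Sq :|: kSq \subset S by rewrite subUset SqS kSqS.
move/subset_leq_card; apply: leq_trans.
by rewrite cardsU dis cards0 subn0 ck mul2n addnn.
Qed.

End Aux.
End Aux.

Theorem lemma4p5 (l : nat) (Hl : prime l) (J : 'M['F_l]_4)
  (HJ : nondeg_alternating J) (G : {group {'GL_4['F_l]}}) :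
  maximal_Hasse_in_GSp4 J G ->
  ~ irreducible_on_F4 (G :&: Sp4 J) ->
  [set mult J (GLval g) | g : {'GL_4['F_l]} in G] = [set k : 'F_l | k != 0].
Proof. exact: Aux.main_gen. Qed.
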